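(* Let $d\ge2$ and $\rho\ge1$. For every $\rho$-balanced rectangle $R\subseteq\mathbb Z^d$ and every $X\subseteq R$ we have $p^R(X)\ge\frac{p(X)}{3d\rho}\cdot\frac{|R\setminus X|}{|R|}$.
   Context: For $X\subseteq\mathbb Z^d$, $\partial X$ is the set of ordered pairs $(m,n)$ with $m\in X$, $n\notin X$, $n-m=\pm e_j$ for a standard basis vector $e_j$; $p(X):=|\partial X|$. For $R\subseteq\mathbb Z^d$, $\partial^RX:=\partial X\cap R^2$ and $p^R(X):=|\partial^RX|$. A rectangle is $\prod_{j=1}^d\{a_j,\dots,b_j\}$ with side lengths $b_j-a_j+1$; it is $\rho$-balanced if the ratio of any two side lengths is at most $\rho$. *)

(* Defs.v *)
From HB Require Import structures.
From mathcomp Require Import all_boot all_order all_algebra.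
Set Implicit Arguments. Unset Strict Implicit. Unset Printing Implicit Defensive.
Import Order.TTheory GRing.Theory Num.Theory.
Local Open Scope ring_scope.

Definition point (d : nat) := {ffun 'I_d -> int}.

Definition unit_vec (d : nat) (j : 'I_d) : point d :=
  [ffun i => ((i == j) : nat)%:Z].

Definition adjacent (d : nat) (m n : point d) : bool :=
  [exists j : 'I_d, (n - m == unit_vec j) || (n - m == - unit_vec j)].

Definition boundary (d : nat) (X : pred (point d)) : pred (point d * point d) :=
  fun mn => [&& X mn.1, ~~ X mn.2 & adjacent mn.1 mn.2].

Definition boundary_in (d : nat) (R X : pred (point d)) : pred (point d * point d) :=
  fun mn => [&& boundary X mn, R mn.1 & R mn.2].

Definition is_card (T : eqType) (A : pred T) (n : nat) : Prop :=
  exists s : seq T, [/\ uniq s, s =i A & size s = n].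

Definition rect (d : nat) (a b : 'I_d -> int) : pred (point d) :=
  fun m => [forall j, (a j <= m j <= b j)%R].

Definition side (d : nat) (a b : 'I_d -> int) (j : 'I_d) : int := b j - a j + 1.

Definition balanced (F : realFieldType) (d : nat) (rho : F) (a b : 'I_d -> int) : Prop :=
  forall i j : 'I_d, (side a b i)%:~R <= rho * (side a b j)%:~R.

(* Main.v *)
Require Import Defs.
From HB Require Import structures.
From mathcomp Require Import all_boot all_order all_algebra.
Set Implicit Arguments. Unset Strict Implicit. Unset Printing Implicit Defensive.
From mathcomp Require Import zify ring lra.
Set Implicit Arguments. Unset Strict Implicit. Unset Printing Implicit Defensive.

Lemma line_nat (f : nat -> bool) m a b : a < m -> b < m ->
  f a <= f b + \sum_(0 <= c < m.-1) (f c (+) f c.+1).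
Proof.
have key : forall a k, (f a <= f (a + k) + \sum_(a <= c < a + k) (f c (+) f c.+1))
   /\ (f (a + k) <= f a + \sum_(a <= c < a + k) (f c (+) f c.+1)).
  move=> a0; elim=> [|k [IH1 IH2]]; first by rewrite addn0 big_geq // addn0.
  rewrite addnS big_nat_recr ?leq_addr //=.
  move: IH1 IH2; set S := \sum_(_ <= _ < _) _.
  by case: (f a0) (f (a0 + k)) (f (a0+k).+1) => [] [] [] /=; lia.
have sub : forall x y, x <= y -> y <= m.-1 ->
   \sum_(x <= c < y) (f c (+) f c.+1) <= \sum_(0 <= c < m.-1) (f c (+) f c.+1).
  move=> x y hxy hy.
  rewrite [X in _ <= X](@big_cat_nat _ _ _ x) //= ?(leq_trans hxy) //.
  rewrite [X in _ <= _ + X](@big_cat_nat _ _ _ y _ m.-1) //=.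
  by apply: leq_trans (leq_addr _ _) (leq_addl _ _).
move=> am bm.
case: (leqP a b) => hab.
  have [h1 _] := key a (b - a); move: h1; rewrite (subnKC hab) => h1.
  apply: (leq_trans h1); rewrite leq_add2l; apply: (sub a b). exact: hab.
  rewrite -ltnS (ltn_predK bm); exact: bm.
have [_ h2] := key b (a - b); move: h2; rewrite (subnKC (ltnW hab)) => h2.
apply: (leq_trans h2); rewrite leq_add2l; apply: (sub b a). exact: ltnW hab.
rewrite -ltnS (ltn_predK am); exact: am.
Qed.

Section Core.
Variables (n K : nat).
Notation U := {ffun 'I_n.+1 -> 'I_K.+1}.
Variable L : 'I_n.+1 -> nat.
Hypothesis LK : forall k, L k <= K.+1.
Hypothesis L0 : forall k, 0 < L k.
Variable A : pred U.
Definition inR (z : U) := [forall k, z k < L k].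
Hypothesis AR : forall z, A z -> inR z.

Definition setc (z : U) (i : 'I_n.+1) (c : nat) : U :=
  [ffun k => if k == i then inord c else z k].
Definition mix (S : pred 'I_n.+1) (x y : U) : U :=
  [ffun k => if S k then y k else x k].

Lemma setc_id z i : setc z i (z i) = z.
Proof. by apply/ffunP=> k; rewrite ffunE; case: eqP => // ->; rewrite inord_val. Qed.

Lemma setcc z i c c' : setc (setc z i c) i c' = setc z i c'.
Proof. by apply/ffunP=> k; rewrite !ffunE; case: eqP. Qed.

Lemma setc_at z i c : c <= K -> (setc z i c i : nat) = c.
Proof. by move=> h; rewrite ffunE eqxx inordK. Qed.

Lemma setc_ne z i c k : k != i -> setc z i c k = z k.
Proof. by move=> h; rewrite ffunE (negbTE h). Qed.

Lemma inR_setc z i c : inR z -> c < L i -> inR (setc z i c).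
Proof.
move=> /forallP h hc; apply/forallP=> k; rewrite ffunE.
case: eqP => [->|_]; last exact: h.
by rewrite inordK // (leq_trans hc) // -ltnS LK.
Qed.

Lemma inR_setcE z i c : inR (setc z i c) -> c <= K -> c < L i.
Proof. by move=> /forallP /(_ i); rewrite ffunE eqxx => h hc; rewrite inordK in h. Qed.

Lemma inR_mix S x y : inR (mix S x y) && inR (mix S y x) = inR x && inR y.
Proof.
apply/andP/andP => [[/forallP h1 /forallP h2]|[/forallP h1 /forallP h2]]; split; apply/forallP=> k.
- by have := h1 k; have := h2 k; rewrite !ffunE; case: (S k).
- by have := h1 k; have := h2 k; rewrite !ffunE; case: (S k).
- by rewrite ffunE; case: (S k).
- by rewrite ffunE; case: (S k).
Qed.

Lemma mixK S x y : mix S (mix S x y) (mix S y x) = x.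
Proof. by apply/ffunP=> k; rewrite !ffunE; case: (S k). Qed.

Definition cross (i : 'I_n.+1) (z : U) : nat :=
  \sum_(0 <= c < (L i).-1) (A (setc z i c) (+) A (setc z i c.+1)).

Lemma line z i c1 c2 : inR z -> c1 < L i -> c2 < L i ->
  A (setc z i c1) <= A (setc z i c2) + cross i z.
Proof. move=> _ h1 h2; exact: (line_nat (fun c => A (setc z i c)) h1 h2). Qed.


Lemma sum_if_eq (x m : nat) (g : nat) :
  \sum_(0 <= c < m) (if x == c then g else 0) = if x < m then g else 0.
Proof.
elim: m => [|m IH]; first by rewrite big_geq.
rewrite big_nat_recr //= IH ltnS.
by case: (ltngtP x m); rewrite ?addn0 ?add0n.
Qed.

Lemma partition_sum i m (G : U -> nat) :
  \sum_(z | inR z && (z i < m)) G z =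
  \sum_(0 <= c < m) \sum_(z | inR z && (z i == c :> nat)) G z.
Proof.
under [RHS]eq_bigr do rewrite big_mkcond /=.
rewrite exchange_big /= [LHS]big_mkcond /=.
apply: eq_bigr => z _.
transitivity (if z i < m then (if inR z then G z else 0) else 0).
  by case: (inR z); case: (_ < _).
rewrite -(sum_if_eq (z i) m (if inR z then G z else 0)).
apply: eq_bigr => c _.
by case: (inR z); case: eqP.
Qed.

Lemma slice_reindex i c c' (G : U -> nat) : c < L i -> c' < L i ->
  \sum_(z | inR z && (z i == c' :> nat)) G z =
  \sum_(z | inR z && (z i == c :> nat)) G (setc z i c').
Proof.
move=> hc hc'.
have cK : c <= K by rewrite -ltnS (leq_trans hc (LK i)).
have cK' : c' <= K by rewrite -ltnS (leq_trans hc' (LK i)).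
rewrite (reindex_onto (fun z => setc z i c') (fun z => setc z i c)) /=.
  apply: eq_bigl => z.
  rewrite setcc setc_at // eqxx andbT.
  apply/andP/andP => [[h1 h2]|[h1 /eqP h2]].
    have ez : z i = c :> nat by rewrite -(eqP h2) ffunE eqxx inordK.
    split; last by rewrite ez.
    by rewrite -(eqP h2) -(setcc z i c'); apply: inR_setc.
  split; first exact: inR_setc.
  by apply/eqP; rewrite -{2}(setc_id z i) h2.
move=> z /andP [h1 /eqP h2].
by rewrite setcc -h2 setc_id.
Qed.

Lemma fiber i c (F : U -> nat) : c < L i ->
  \sum_(z | inR z) F (setc z i c) = L i * \sum_(z | inR z && (z i == c :> nat)) F z.
Proof.
move=> hc.
rewrite (eq_bigl (fun z => inR z && (z i < L i))); last first.
  by move=> z; case h: (inR z) => //=; move/forallP: h => /(_ i).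
rewrite partition_sum.
rewrite (eq_big_nat _ _ (F2 := fun _ => \sum_(z | inR z && (z i == c :> nat)) F z)).
  by rewrite sum_nat_const_nat subn0.
move=> c' /andP [_ hc'].
rewrite (slice_reindex _ hc hc').
apply: eq_bigr => z /andP [_ /eqP e].
by rewrite setcc -e setc_id.
Qed.


Definition hx i (z : U) : nat := A z (+) A (setc z i (z i).+1).
Definition P i := \sum_(z | inR z && ((z i).+1 < L i)) hx i z.

Lemma cross_eq i z : cross i z = \sum_(0 <= c < (L i).-1) hx i (setc z i c).
Proof.
apply: eq_big_nat => c /andP [_ hc].
have cK : c <= K.
  by rewrite -ltnS (leq_trans _ (LK i)) // (leq_trans hc) // leq_pred.
by rewrite /hx setc_at // setcc.
Qed.

Lemma P_part i : P i = \sum_(0 <= c < (L i).-1) \sum_(z | inR z && (z i == c :> nat)) hx i z.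
Proof.
rewrite -partition_sum /P; apply: eq_bigl => z.
by rewrite -ltn_predRL.
Qed.

Lemma sum_cross i : \sum_(z | inR z) cross i z = L i * P i.
Proof.
under eq_bigr do rewrite cross_eq.
rewrite exchange_big P_part big_distrr /=.
apply: eq_big_nat => c /andP [_ hc].
apply: fiber.
by rewrite (leq_trans hc) // leq_pred.
Qed.

Lemma face_cross j v : v < L j ->
  \sum_(x | inR x && (x j == v :> nat)) cross j x = P j.
Proof.
move=> hv.
under eq_bigr do rewrite cross_eq.
rewrite exchange_big P_part /=.
apply: eq_big_nat => c /andP [_ hc].
rewrite [RHS](@slice_reindex j v c (hx j) hv) //.
by rewrite (leq_trans hc) // leq_pred.
Qed.


Lemma mix_sum (S : pred 'I_n.+1) j v (G : U -> nat) : S j ->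
  \sum_(x | inR x && (x j == v :> nat)) \sum_(y | inR y) G (mix S x y)
  = (\sum_(z | inR z) G z) * (\sum_(z | inR z && (z j == v :> nat)) 1).
Proof.
move=> Sj.
rewrite pair_big_dep /=.
pose tau (p : U * U) := (mix S p.1 p.2, mix S p.2 p.1).
have tauK : involutive tau by move=> [x y]; rewrite /tau /= !mixK.
rewrite (reindex_inj (inv_inj tauK)) /=.
transitivity (\sum_(p | inR p.1 && (inR p.2 && (p.2 j == v :> nat))) G p.1).
  apply: eq_big => [[x y]|[x y] _] /=; last by rewrite mixK.
  have -> : mix S x y j = y j by rewrite ffunE Sj.
  by rewrite -andbA (andbC (_ == _)) andbA inR_mix -andbA.
rewrite -(pair_big (fun z => inR z) (fun z => inR z && (z j == v :> nat)) (fun a b => G a)) /=.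
rewrite big_distrl /=; apply: eq_bigr => z _.
by rewrite big_distrr /=; apply: eq_bigr => y _; rewrite muln1.
Qed.


Definition W (j : 'I_n.+1) (u : nat) (x y : U) :=
  mix (fun k : 'I_n.+1 => (k < u) || (k == j)) x y.

Lemma inR_W j u x y : inR x -> inR y -> inR (W j u x y).
Proof. by move=> hx hy; have := inR_mix (fun k : 'I_n.+1 => (k < u) || (k == j)) x y; rewrite hx hy => /andP []. Qed.

Lemma inR_lt z i : inR z -> z i < L i.
Proof. by move/forallP. Qed.

Lemma chain_step j x y m : inR x -> inR y -> m <= n.+1 ->
  A x <= cross j x + \sum_(0 <= u < m | u != j :> nat) cross (inord u) (W j u x y) + A (W j m x y).
Proof.
move=> hx hy; elim: m => [|m IH] hm.
  rewrite big_geq // addn0.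
  have -> : W j 0 x y = setc x j (y j).
    apply/ffunP=> k; rewrite !ffunE /=.
    by case: eqP => [->|//]; rewrite inord_val.
  rewrite addnC -{1}(setc_id x j); apply: line => //; exact: inR_lt.
have {IH} IH := IH (ltnW hm).
apply: (leq_trans IH).
rewrite [in X in _ <= X]big_mkcond big_nat_recr //= -big_mkcond /= -!addnA leq_add2l leq_add2l.
case: eqP => [e|ne].
  have -> : W j m.+1 x y = W j m x y.
    apply/ffunP=> k; rewrite !ffunE /= ltnS leq_eqVlt e.
    case: (k =P j) => [->|/eqP nk]; first by rewrite eqxx !orbT.
    by rewrite (inj_eq val_inj) (negbTE nk).
  by rewrite add0n.
set i : 'I_n.+1 := inord m.
have vi : (i : nat) = m by rewrite /i inordK.
have -> : W j m.+1 x y = setc (W j m x y) i (y i).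
  apply/ffunP=> k; rewrite !ffunE /=.
  case: (k =P i) => [->|/eqP nk].
    by rewrite vi ltnSn inord_val.
  have nkm : (k : nat) != m by rewrite -vi (inj_eq val_inj).
  by rewrite ltnS leq_eqVlt (negbTE nkm).
rewrite /= addnC -{1}(setc_id (W j m x y) i); apply: line.
- exact: inR_W.
- exact: inR_lt (inR_W j m hx hy).
- exact: inR_lt.
Qed.

Lemma chain j x y : inR x -> inR y ->
  (A x && ~~ A y) <= cross j x + \sum_(0 <= u < n.+1 | u != j :> nat) cross (inord u) (W j u x y).
Proof.
move=> hx hy.
have := chain_step j hx hy (leqnn n.+1).
have -> : W j n.+1 x y = y by apply/ffunP=> k; rewrite !ffunE ltn_ord.
by case: (A x); case: (A y); rewrite /= ?addn0 ?addn1 // ltnS.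
Qed.


Definition NN := \sum_(z | inR z) 1.
Definition YY := \sum_(z | inR z) (~~ A z : nat).
Definition faceA j v := \sum_(x | inR x && (x j == v :> nat)) (A x : nat).

Lemma face_bound j v : v < L j ->
  faceA j v * YY * L j <= P j * NN * L j + NN * \sum_(u : 'I_n.+1 | u != j) L u * P u.
Proof.
move=> hv.
set Sv := \sum_(z | inR z && (z j == v :> nat)) 1.
have hSv : Sv * L j = NN by rewrite /NN /Sv mulnC -(fiber (fun _ => 1) hv).
have main : faceA j v * YY <= P j * NN + (\sum_(u : 'I_n.+1 | u != j) L u * P u) * Sv.
  have E1 : faceA j v * YY = \sum_(x | inR x && (x j == v :> nat)) \sum_(y | inR y) (A x && ~~ A y : nat).
    rewrite /faceA /YY big_distrl /=; apply: eq_bigr => x _.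
    by rewrite big_distrr /=; apply: eq_bigr => y _; rewrite mulnb.
  rewrite E1.
  apply: leq_trans.
    apply: leq_sum => x /andP [hx _]; apply: leq_sum => y hy.
    exact: (chain j hx hy).
  rewrite /=.
  under eq_bigr do rewrite big_split /=.
  rewrite big_split /= leq_add //.
    rewrite -(face_cross hv) /NN big_distrl /=.
    by apply: eq_leq; apply: eq_bigr => x _; rewrite big_distrr /= ; apply: eq_bigr => y _; rewrite muln1.
  rewrite big_distrl /=.
  under eq_bigr do rewrite exchange_big /=.
  rewrite exchange_big /= big_mkord.
  apply: eq_leq; apply: eq_bigr => u uj.
  rewrite (@mix_sum (fun k : 'I_n.+1 => (k < u) || (k == j)) j v (cross (inord u))) ?eqxx ?orbT //.
  by rewrite inord_val sum_cross.
rewrite -hSv.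
have := leq_mul main (leqnn (L j)).
rewrite mulnDl; move/leq_trans; apply.
by rewrite hSv -[X in _ + X <= _]mulnA hSv [X in _ <= _ + X]mulnC.
Qed.

End Core.
Import Order.TTheory GRing.Theory Num.Theory.

Lemma eqle (R : numDomainType) (x y : R) : x = y -> (x <= y)%R.
Proof. by move=> ->. Qed.

Lemma final_alg (F : realFieldType) (n : nat) (rho : F) (L Pv fa fb : 'I_n.+1 -> nat)
   (N Y pX pRX : nat) :
  (1 <= rho)%R -> 0 < N -> Y <= N -> (forall k, 0 < L k) ->
  (forall i j, ((L i)%:R <= rho * (L j)%:R)%R) ->
  \sum_u Pv u <= pRX -> pX <= pRX + \sum_j (fa j + fb j) ->
  (forall j, fa j * Y * L j <= Pv j * N * L j + N * \sum_(u | u != j) L u * Pv u) ->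
  (forall j, fb j * Y * L j <= Pv j * N * L j + N * \sum_(u | u != j) L u * Pv u) ->
  (pX%:R / (3 * n.+1%:R * rho) * (Y%:R / N%:R) <= pRX%:R :> F)%R.
Proof.
move=> r1 N0 YN L0 bal hP hpX hfa hfb.
have r0 : (0 < rho)%R by apply: lt_le_trans r1; rewrite ltr01.
set Pt : F := (\sum_u (Pv u)%:R)%R.
have Pt0 : (0 <= Pt)%R by apply: sumr_ge0 => u _; rewrite ler0n.
have face : forall f : 'I_n.+1 -> nat,
    (forall j, f j * Y * L j <= Pv j * N * L j + N * \sum_(u | u != j) L u * Pv u) ->
    forall j, ((f j)%:R * Y%:R <= rho * N%:R * Pt :> F)%R.
  move=> f hf j.
  have lpos : (0 < (L j)%:R :> F)%R by rewrite ltr0n.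
  rewrite -(ler_pM2r lpos).
  have h := hf j; move: h; rewrite -(ler_nat F) !natrD !natrM natr_sum => h.
  apply: (le_trans h).
  have s1 : (\sum_(u | u != j) ((L u * Pv u)%:R : F) <= rho * (L j)%:R * \sum_(u | u != j) (Pv u)%:R)%R.
    rewrite mulr_sumr; apply: ler_sum => u _; rewrite natrM ler_wpM2r //.
  have s2 : Pt = ((Pv j)%:R + \sum_(u | u != j) (Pv u)%:R)%R by rewrite /Pt (bigD1 j).
  have s3 : ((Pv j)%:R * N%:R * (L j)%:R <= rho * ((Pv j)%:R * N%:R * (L j)%:R) :> F)%R.
    by rewrite ler_peMl // !mulr_ge0 ?ler0n.
  have s4 := ler_wpM2l (ler0n F N) s1.
  apply: (le_trans (lerD s3 s4)).
  by rewrite s2; apply: eqle; ring.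
have hQ : ((\sum_j (fa j + fb j))%:R * Y%:R <= 2 * n.+1%:R * rho * N%:R * Pt :> F)%R.
  rewrite natr_sum mulr_suml.
  apply: (@le_trans _ _ (\sum_(j < n.+1) (2 * rho * N%:R * Pt))%R).
    apply: ler_sum => j _; rewrite natrD mulrDl.
    have := face _ hfa j; have := face _ hfb j; lra.
  by rewrite sumr_const card_ord; apply: eqle; rewrite -mulr_natr; ring.
have hPt : (Pt <= pRX%:R)%R by rewrite /Pt -natr_sum ler_nat.
have hpX' : (pX%:R <= pRX%:R + (\sum_j (fa j + fb j))%:R :> F)%R by rewrite -natrD ler_nat.
have YN' : (Y%:R <= N%:R :> F)%R by rewrite ler_nat.
have N0' : (0 < N%:R :> F)%R by rewrite ltr0n.
have D1 : (1 <= n.+1%:R :> F)%R by rewrite ler1n.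
have Y0 : (0 <= Y%:R :> F)%R by rewrite ler0n.
rewrite mulf_div ler_pdivrMr; last by rewrite !mulr_gt0 // ltr0n.
set S := ((\sum_j (fa j + fb j))%:R : F)%R.
set y := (Y%:R : F)%R; set nn := (N%:R : F)%R; set D := (n.+1%:R : F)%R; set p := (pRX%:R : F)%R.
have e1 : (pX%:R * y <= p * y + S * y)%R by rewrite -mulrDl ler_wpM2r.
have e2 : (p * y <= p * nn)%R by rewrite ler_wpM2l // ler0n.
have e3 : (S * y <= 2 * D * rho * nn * p)%R.
  apply: (le_trans hQ); rewrite ler_wpM2l // !mulr_ge0 // ?ler0n // ltW //.
have e4 : (p * nn <= D * rho * nn * p)%R.
  have Dr : (1 <= D * rho)%R by apply: mulr_ege1.
  apply: le_trans (ler_peMl _ Dr) _; first by rewrite mulr_ge0 ?ler0n.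
  by apply: eqle; ring.
apply: le_trans (le_trans e1 (lerD e2 e3)) _.
apply: le_trans (lerD e4 (lexx _)) _.
by apply: eqle; ring.
Qed.
Lemma card_img (T : finType) (E : eqType) (f : T -> E) (Q : pred T) (B : pred E) n :
  injective f -> (forall t, Q t -> B (f t)) -> (forall e, B e -> exists t, Q t /\ f t = e) ->
  is_card B n -> n = #|Q|.
Proof.
move=> fi h1 h2 [s [us es <-]].
rewrite cardE -(size_map f).
apply: perm_size; apply: uniq_perm => //.
  by rewrite map_inj_uniq // enum_uniq.
move=> e; rewrite es; apply/idP/mapP => [/h2 [t [qt <-]]|[t]].
  by exists t; rewrite // mem_enum.
by rewrite mem_enum => /h1 ? ->.
Qed.

Lemma card_inj_le (T : finType) (E : eqType) (g : T -> E) (Q : pred T) (B : pred E) n :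
  {in Q &, injective g} -> (forall t, Q t -> B (g t)) -> is_card B n -> #|Q| <= n.
Proof.
move=> gi h [s [us es <-]].
rewrite cardE -(size_map g).
apply: uniq_leq_size.
  rewrite map_inj_in_uniq ?enum_uniq //.
  by move=> x y; rewrite !mem_enum; apply: gi.
by move=> e /mapP [t]; rewrite mem_enum es => /h ? ->.
Qed.

Lemma cover_le (E : eqType) (B B1 : pred E) (s2 : seq E) n n1 :
  is_card B n -> is_card B1 n1 -> (forall e, B e -> B1 e \/ e \in s2) -> n <= n1 + size s2.
Proof.
move=> [s [us es <-]] [s1 [us1 es1 <-]] h.
rewrite -size_cat; apply: uniq_leq_size => // e.
rewrite es mem_cat es1 => /h [h1|h1]; apply/orP; [left|right]; exact: h1.
Qed.

Lemma sum_bool_card (T : finType) (P b : pred T) :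
  \sum_(i | P i) (b i : nat) = #|[pred i | P i && b i]|.
Proof.
rewrite -sum1_card big_mkcondr /=; apply: eq_big => // i.
Qed.

Local Open Scope ring_scope.

Lemma unit_vec_inj d (u u' : 'I_d) : unit_vec u = unit_vec u' -> u = u'.
Proof.
move=> e; have := congr1 (fun f : point d => f u) e; rewrite !ffunE eqxx.
by case: eqP.
Qed.

Lemma unit_vec_neg d (u u' : 'I_d) : unit_vec u <> - unit_vec u'.
Proof.
move=> e; have := congr1 (fun f : point d => f u) e; rewrite !ffunE eqxx.
by case: eqP.
Qed.

Theorem main_n (F : realFieldType) (n : nat) (rho : F) (a b : 'I_n.+1 -> int)
    (X : pred (point n.+1)) (nR nRX pX pRX : nat) :
  1 <= rho ->
  (forall j, a j <= b j) -> balanced rho a b ->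
  {subset X <= rect a b} ->
  is_card (rect a b) nR ->
  is_card (fun m => rect a b m && ~~ X m) nRX ->
  is_card (boundary X) pX ->
  is_card (boundary_in (rect a b) X) pRX ->
  pX%:R / (3 * n.+1%:R * rho) * (nRX%:R / nR%:R) <= pRX%:R :> F.
Proof.
move=> r1 hab bal hX cR cRX cpX cpRX.
pose L k := `|side a b k|%N.
have Lz : forall k, (L k)%:Z = side a b k.
  move=> k; rewrite /L gez0_abs // /side; have := hab k; lia.
clearbody L.
pose K := (\max_(k < n.+1) L k)%N.
have LK : forall k, (L k <= K.+1)%N by move=> k; apply: leq_trans (leq_bigmax k) (leqnSn _).
have L0 : forall k, (0 < L k)%N.
  by move=> k; rewrite -ltz_nat Lz /side; have := hab k; lia.
pose phi (z : {ffun 'I_n.+1 -> 'I_K.+1}) : point n.+1 := [ffun k => a k + (z k : nat)%:Z].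
pose A (z : {ffun 'I_n.+1 -> 'I_K.+1}) := inR L z && X (phi z).
have rect_phi : forall z, rect a b (phi z) = inR L z.
  move=> z; apply: eq_forallb => k; rewrite ffunE -ltz_nat Lz /side.
  by apply/idP/idP; lia.
have phi_inj : injective phi.
  move=> z z' e; apply/ffunP => k; apply: val_inj => /=.
  have := congr1 (fun f : point n.+1 => f k) e; rewrite /= !ffunE; lia.
have phi_surj : forall m, rect a b m -> exists z, inR L z /\ phi z = m.
  move=> m /forallP hm.
  have hk : forall k, ((absz (m k - a k)) < L k)%N.
    by move=> k; rewrite -ltz_nat Lz gez0_abs /side; have := hm k; lia.
  exists [ffun k => inord (absz (m k - a k))]; split.
    apply/forallP => k; rewrite ffunE inordK //; exact: leq_trans (hk k) (LK k).
  apply/ffunP => k; rewrite !ffunE inordK ?(leq_trans (hk k) (LK k)) //.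
  have e : (absz (m k - a k) : int) = m k - a k.
    by apply: gez0_abs; have := hm k; lia.
  by rewrite e addrCA subrr addr0.
have eN : nR = NN K L.
  rewrite (card_img (Q := [pred z | inR L z]) phi_inj _ _ cR).
    by rewrite /NN -sum1_card; apply: eq_bigl => z; rewrite inE.
    by move=> z; rewrite inE rect_phi.
  by move=> m /phi_surj [z [h1 h2]]; exists z.
have eY : nRX = YY L A.
  rewrite (card_img (Q := [pred z | inR L z && ~~ A z]) phi_inj _ _ cRX).
    by rewrite /YY sum_bool_card.
    by move=> z; rewrite inE rect_phi /A => /andP [-> ->].
  move=> m /andP [/phi_surj [z [h1 h2]] hm]; exists z; split => //.
  by rewrite inE /A h1 h2 hm.
have diff : forall (z : {ffun 'I_n.+1 -> 'I_K.+1}) (u : 'I_n.+1), ((z u).+1 <= K)%N ->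
    phi (setc z u (z u).+1) - phi z = unit_vec u.
  move=> z u hu; apply/ffunP => k; rewrite !ffunE.
  case: eqP => [->|_]; rewrite ?inordK //; lia.
have hP : (\sum_u P L A u <= pRX)%N.
  pose Qc := [pred p : 'I_n.+1 * {ffun 'I_n.+1 -> 'I_K.+1} |
    [&& inR L p.2, ((p.2 p.1).+1 < L p.1)%N & A p.2 (+) A (setc p.2 p.1 (p.2 p.1).+1)]].
  have -> : (\sum_u P L A u = #|Qc|)%N.
    rewrite /P /hx pair_big_dep /= sum_bool_card; apply: eq_card => p.
    by rewrite /Qc !inE andbA.
  pose g (p : 'I_n.+1 * {ffun 'I_n.+1 -> 'I_K.+1}) :=
    if A p.2 then (phi p.2, phi (setc p.2 p.1 (p.2 p.1).+1))
    else (phi (setc p.2 p.1 (p.2 p.1).+1), phi p.2).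
  have gdiff : forall p, p \in Qc ->
      (g p).2 - (g p).1 = if A p.2 then unit_vec p.1 else - unit_vec p.1.
    move=> [u z]; rewrite inE /= => /and3P [hz hu _].
    have hK : ((z u).+1 <= K)%N by rewrite -ltnS (leq_trans hu (LK u)).
    rewrite /g /=; case: (A z) => /=; first exact: diff.
    by rewrite -opprB diff.
  apply: (card_inj_le (g := g)) cpRX.
    move=> [u z] [u' w] hp hq e.
    have d1 := gdiff _ hp; have d2 := gdiff _ hq; rewrite e in d1.
    move: hp hq; rewrite !inE /= => /and3P [hz hu x1] /and3P [hw hu' x2].
    move: e d1 d2; rewrite /g /=.
    case Az: (A z); case Aw: (A w) => /= e d1 d2; rewrite d1 in d2.
    - have uu := unit_vec_inj d2; subst u'.
      by case: e => /phi_inj ->.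
    - by case: (unit_vec_neg d2).
    - by case: (@unit_vec_neg _ u' u); rewrite d2.
    - have uu := unit_vec_inj (oppr_inj d2); subst u'.
      by case: e => _ /phi_inj ->.
  move=> [u z]; rewrite inE /= => /and3P [hz hu hx].
  have hz' : inR L (setc z u (z u).+1) by apply: inR_setc.
  have d := gdiff (u, z); rewrite inE /= hz hu hx /= in d; have {}d := d isT.
  have AX : forall w, inR L w -> X (phi w) = A w by move=> w h; rewrite /A h.
  rewrite /boundary_in /boundary /adjacent.
  move: d hx; rewrite /g; case Az: (A z) => /= d hx;
    rewrite !rect_phi hz hz' !AX //; move: hx; rewrite Az /=.
    move=> ->; rewrite /= andbT; apply/existsP; exists u; by rewrite d eqxx.
  move=> ->; rewrite /= andbT; apply/existsP; exists u; by rewrite d eqxx orbT.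
have hpX : (pX <= pRX + \sum_j (faceA L A j (L j).-1 + faceA L A j 0))%N.
  pose FQ := [pred p : ('I_n.+1 * {ffun 'I_n.+1 -> 'I_K.+1}) * bool |
     A p.1.2 && (if p.2 then (p.1.2 p.1.1 == (L p.1.1).-1 :> nat)
                 else (p.1.2 p.1.1 == 0 :> nat))].
  pose hm (p : ('I_n.+1 * {ffun 'I_n.+1 -> 'I_K.+1}) * bool) :=
     (phi p.1.2, phi p.1.2 + (if p.2 then unit_vec p.1.1 else - unit_vec p.1.1)).
  have -> : (\sum_j (faceA L A j (L j).-1 + faceA L A j 0) = size (map hm (enum FQ)))%N.
    rewrite size_map -cardE.
    have -> : #|FQ| = (\sum_p (FQ p : nat))%N.
      by rewrite sum_bool_card; apply: eq_card => p; rewrite !inE.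
    transitivity (\sum_(q : 'I_n.+1 * {ffun 'I_n.+1 -> 'I_K.+1}) \sum_(s : bool) (FQ (q, s) : nat))%N; last first.
      by rewrite pair_big; apply: eq_bigr => [[q s] _].
    transitivity (\sum_(j : 'I_n.+1) \sum_(z : {ffun 'I_n.+1 -> 'I_K.+1}) \sum_(s : bool) (FQ ((j, z), s) : nat))%N; last first.
      by rewrite pair_big; apply: eq_bigr => [[j z] _].
    apply: eq_bigr => j _.
    rewrite /faceA [X in X + _ = _]big_mkcond [X in _ + X = _]big_mkcond -big_split /=.
    apply: eq_bigr => z _.
    rewrite big_bool /=.
    rewrite /A; case: (inR L z); case: (X (phi z)); case: (_ == (L j).-1); case: (_ == 0%N); reflexivity.
  apply: cover_le cpX cpRX _.
  move=> [m m'] /= hb.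
  case: (boolP (rect a b m')) => hm'.
    left; rewrite /boundary_in hb hm' andbT /=.
    by move: hb => /and3P [Xm _ _]; apply: hX.
  right; move: hb => /and3P [/= Xm nXm' /existsP [j /= hj]].
  have [z [hz ez]] := phi_surj m (hX _ Xm).
  have Az : A z by rewrite /A hz ez Xm.
  move/forallPn: hm' => [k]; rewrite negb_and -!ltNge => hk.
  have rm : forall i, a i <= m i <= b i by move=> i; move: (hX _ Xm) => /forallP; apply.
  have Lzj : (L j)%:Z = b j - a j + 1 by rewrite Lz.
  have zj : (z j < L j)%N by move/forallP: hz.
  have mj : m j = a j + (z j : nat)%:Z by rewrite -ez ffunE.
  have hjj : forall (s : point n.+1), m' - m = s -> m' k - m k = s k.
    by move=> s e; rewrite -e !ffunE.
  apply/mapP.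
  case/orP: hj => /eqP hj.
    exists ((j, z), true); last by rewrite /hm /= -hj ez addrC subrK.
    rewrite mem_enum inE /= Az /=; apply/eqP.
    have := hjj _ hj; rewrite ffunE.
    case: (k =P j) => [ekj|/eqP nkj] /=.
      subst k; have /andP[r1' r2'] := rm j; move=> e1.
      have e2 : m' j = m j + (m' j - m j) by rewrite addrC subrK.
      rewrite e1 in e2.
      set M := m j in e2 r1' r2' mj *; set M' := m' j in e2 hk *.
      case/orP: hk => hk; lia.
    have /andP[r1' r2'] := rm k; move=> e1.
    have e2 : m' k = m k + (m' k - m k) by rewrite addrC subrK.
    rewrite e1 in e2.
    set M := m k in e2 r1' r2'; set M' := m' k in e2 hk.
    case/orP: hk => hk; lia.
  exists ((j, z), false); last by rewrite /hm /= -hj ez addrC subrK.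
  rewrite mem_enum inE /= Az /=; apply/eqP.
  have := hjj _ hj; rewrite !ffunE.
  case: (k =P j) => [ekj|/eqP nkj] /=.
    subst k; have /andP[r1' r2'] := rm j; move=> e1.
    have e2 : m' j = m j + (m' j - m j) by rewrite addrC subrK.
    rewrite e1 in e2.
    set M := m j in e2 r1' r2' mj *; set M' := m' j in e2 hk *.
    case/orP: hk => hk; lia.
  have /andP[r1' r2'] := rm k; move=> e1.
  have e2 : m' k = m k + (m' k - m k) by rewrite addrC subrK.
  rewrite e1 in e2.
  set M := m k in e2 r1' r2'; set M' := m' k in e2 hk.
  case/orP: hk => hk; lia.
rewrite eN eY.
apply: (@final_alg F n rho L (P L A) (fun j => faceA L A j (L j).-1) (fun j => faceA L A j 0)) => //.
- pose z0 : {ffun 'I_n.+1 -> 'I_K.+1} := [ffun k => ord0].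
  have hz0 : inR L z0 by apply/forallP => k; rewrite ffunE L0.
  by rewrite /NN (bigD1 z0).
- rewrite /YY /NN; apply: leq_sum => z _; exact: leq_b1.
- by move=> i j; have := bal i j; rewrite -!Lz.
- move=> j; apply: face_bound => //; by rewrite prednK ?L0.
- move=> j; apply: face_bound => //; exact: L0.
Qed.

Theorem lemma4p4 (F : realFieldType) (d : nat) (rho : F) (a b : 'I_d -> int)
    (X : pred (point d)) (nR nRX pX pRX : nat) :
  (2 <= d)%N -> 1 <= rho ->
  (forall j, a j <= b j) -> balanced rho a b ->
  {subset X <= rect a b} ->
  is_card (rect a b) nR ->
  is_card (fun m => rect a b m && ~~ X m) nRX ->
  is_card (boundary X) pX ->
  is_card (boundary_in (rect a b) X) pRX ->
  pX%:R / (3 * d%:R * rho) * (nRX%:R / nR%:R) <= pRX%:R :> F.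
Proof.
case: d a b X => [|n] a b X hd; first by [].
exact: main_n.
Qed.
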